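(* Let $\mathbb O$ be a finite set of consecutive integers containing $0$, and let $\theta=0$. If $x(0)\in\mathbb O^n$ has no coordinate equal to $0$, then there exists a finite legal update sequence from $x(0)$ along which the system reaches, in finite time, either a consensus state $(z,\dots,z)$ with $z\neq 0$ or a non-consensus equilibrium.
   Context: Let $n\ge1$, $\mathcal V=\{1,\dots,n\}$, and let $W=(w_{ij})$ be an $n\times n$ row-stochastic matrix. For $x\in\mathbb O^n$, $i\in\mathcal V$, $z\in\mathbb O$, define $C^i_{\mathrm{social}}(z;x)=\sum_{j=1}^n w_{ij}|z-x_j|$ and $P_i(x)=\{z\in\mathbb O: C^i_{\mathrm{social}}(z;x)\le C^i_{\mathrm{social}}(x_i;x),\ |z-\theta|\le |x_i-\theta|\}$ (Pareto improvements between social cost and cognitive cost $|z-\theta|$). A legal update sequence from $x(0)$ is a finite sequence $(i_1,z_1),\dots,(i_T,z_T)$ with $i_t\in\mathcal V$, generating $x(1),\dots,x(T)$ where $x(t)$ is obtained from $x(t-1)$ by setting coordinate $i_t$ to $z_t$, such that $z_t\in P_{i_t}(x(t-1))$ for every $t$. An equilibrium is a state $x^*$ with $P_i(x^* )=\{x_i^*\}$ for all $i\in\mathcal V$; it is non-consensus if not all coordinates are equal. *)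

(* Defs.v *)
From HB Require Import structures.
From mathcomp Require Import all_boot all_order all_algebra.
Set Implicit Arguments. Unset Strict Implicit. Unset Printing Implicit Defensive.
Import Order.TTheory GRing.Theory Num.Theory.
Local Open Scope ring_scope.

Definition inO (a b : int) (z : int) : bool := (a <= z) && (z <= b).

Definition state (n : nat) := 'I_n -> int.

Definition in_On (a b : int) (n : nat) (x : state n) : Prop :=
  forall j, inO a b (x j).

Definition row_stochastic (R : numDomainType) (n : nat) (W : 'M[R]_n) : Prop :=
  (forall i j, 0 <= W i j) /\ (forall i, \sum_(j < n) W i j = 1).

Definition Csocial (R : numDomainType) (n : nat) (W : 'M[R]_n)
  (i : 'I_n) (z : int) (x : state n) : R :=
  \sum_(j < n) W i j * (`|z - x j|%:~R).

Definition inP (R : numDomainType) (n : nat) (W : 'M[R]_n) (a b theta : int)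
  (x : state n) (i : 'I_n) (z : int) : Prop :=
  [/\ inO a b z,
      Csocial W i z x <= Csocial W i (x i) x
    & `|z - theta| <= `|x i - theta| ].

Definition upd (n : nat) (x : state n) (i : 'I_n) (z : int) : state n :=
  fun j => if j == i then z else x j.

Fixpoint legal (R : numDomainType) (n : nat) (W : 'M[R]_n) (a b theta : int)
  (x : state n) (s : seq ('I_n * int)) : Prop :=
  match s with
  | [::] => True
  | (i, z) :: s' => inP W a b theta x i z /\ legal W a b theta (upd x i z) s'
  end.

Fixpoint run (n : nat) (x : state n) (s : seq ('I_n * int)) : state n :=
  match s with
  | [::] => x
  | (i, z) :: s' => run (upd x i z) s'
  end.

Definition equilibrium (R : numDomainType) (n : nat) (W : 'M[R]_n)
  (a b theta : int) (x : state n) : Prop :=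
  forall i z, inP W a b theta x i z <-> z = x i.

Definition consensus_at (n : nat) (x : state n) (z : int) : Prop :=
  forall j, x j = z.

Definition non_consensus (n : nat) (x : state n) : Prop :=
  exists i j, x i <> x j.

(* Main.v *)
Require Import Defs.
From HB Require Import structures.
From mathcomp Require Import all_boot all_order all_algebra.
From mathcomp Require Import zify.
Import Order.TTheory GRing.Theory Num.Theory.
Set Implicit Arguments. Unset Strict Implicit. Unset Printing Implicit Defensive.
Local Open Scope ring_scope.

Definition sge (v y : int) : int := if v <= y then 1 else -1.
Definition sle (v y : int) : int := if y <= v then 1 else -1.

Definition wsum (R : numDomainType) (n : nat) (W : 'M[R]_n) (i : 'I_n)
  (e : 'I_n -> int) : R := \sum_(j < n) W i j * (e j)%:~R.

Definition Spos (R : numDomainType) (n : nat) (W : 'M[R]_n) (x : state n) (i : 'I_n) : R :=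
  wsum W i (fun j => sge (x i) (x j)).
Definition Sneg (R : numDomainType) (n : nat) (W : 'M[R]_n) (x : state n) (i : 'I_n) : R :=
  wsum W i (fun j => sle (x i) (x j)).

Lemma T1 (v y : int) : `|v - 1 - y| - `|v - y| = sge v y.
Proof. rewrite /sge; case: ifP => H; lia. Qed.
Lemma T2 (y : int) : y != 0 -> `|-1 - y| - `|1 - y| = 2 * sge 1 y.
Proof. rewrite /sge; case: ifP => H; lia. Qed.
Lemma T3 (u y : int) : `|u + 1 - y| - `|u - y| = sle u y.
Proof. rewrite /sle; case: ifP => H; lia. Qed.
Lemma T4 (y : int) : `|1 - y| - `|-1 - y| <= -2 * sge 1 y.
Proof. rewrite /sge; case: ifP => H; lia. Qed.
Lemma T5 (v z y : int) : z < v -> (v - z) * sge v y <= `|z - y| - `|v - y|.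
Proof. rewrite /sge; case: ifP => H; lia. Qed.
Lemma T6 (v z y : int) : v < z -> (z - v) * sle v y <= `|z - y| - `|v - y|.
Proof. rewrite /sle; case: ifP => H; lia. Qed.
Lemma sge_mono (v y y' : int) : y <= y' -> sge v y <= sge v y'.
Proof. rewrite /sge; case: ifP; case: ifP; lia. Qed.

Section W.
Implicit Types (R : realFieldType) (n : nat).

Lemma Cdiff R n (W : 'M[R]_n) i z v (x : state n) :
  Csocial W i z x - Csocial W i v x = wsum W i (fun j => `|z - x j| - `|v - x j|).
Proof.
rewrite /Csocial /wsum -sumrB; apply: eq_bigr => j _.
by rewrite intrB mulrBr.
Qed.

Lemma wle R n (W : 'M[R]_n) i (d e : 'I_n -> int) :
  (forall j, 0 <= W i j) -> (forall j, d j <= e j) -> wsum W i d <= wsum W i e.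
Proof.
move=> Hp Hde; rewrite /wsum; apply: ler_sum => j _.
by apply: ler_wpM2l => //; rewrite ler_int.
Qed.

Lemma wscale R n (W : 'M[R]_n) i c (e : 'I_n -> int) :
  wsum W i (fun j => c * e j) = c%:~R * wsum W i e.
Proof.
rewrite /wsum mulr_sumr; apply: eq_bigr => j _.
by rewrite intrM mulrCA.
Qed.

Lemma wconst R n (W : 'M[R]_n) i c :
  \sum_(j < n) W i j = 1 -> wsum W i (fun _ => c) = c%:~R.
Proof. by move=> H; rewrite /wsum -big_distrl /= H mul1r. Qed.

Lemma wext R n (W : 'M[R]_n) i (d e : 'I_n -> int) :
  (forall j, d j = e j) -> wsum W i d = wsum W i e.
Proof. by move=> H; apply: eq_bigr => j _; rewrite H. Qed.

End W.

Lemma upd_eq n (x : state n) k z : upd x k z k = z.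
Proof. by rewrite /upd eqxx. Qed.
Lemma upd_neq n (x : state n) k z j : j != k -> upd x k z j = x j.
Proof. by move=> H; rewrite /upd (negbTE H). Qed.

Lemma sum_upd n (F G : 'I_n -> int) k :
  (forall j, j != k -> F j = G j) -> \sum_(j < n) F j = \sum_(j < n) G j - G k + F k.
Proof.
move=> H; rewrite (bigD1 k) //= [X in _ = X - _ + _](bigD1 k) //=.
have -> : \sum_(j < n | j != k) F j = \sum_(j < n | j != k) G j.
  by apply: eq_bigr => j Hj; rewrite H.
by rewrite [G k + _]addrC addrK addrC.
Qed.

Lemma in_On_upd a b n (x : state n) k z :
  in_On a b x -> inO a b z -> in_On a b (upd x k z).
Proof. by move=> Hx Hz j; rewrite /upd; case: ifP. Qed.

Definition Fin (R : numDomainType) n (W : 'M[R]_n) (a b : int) (x : state n) : Prop :=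
  equilibrium W a b 0 x /\ exists k, x k != 0.

Lemma eq_of_stable (R : realFieldType) n (W : 'M[R]_n) a b (x : state n) :
  row_stochastic W -> in_On a b x ->
  (forall i, 0 < x i -> 0 < Spos W x i) ->
  (forall i, x i < 0 -> 0 < Sneg W x i) -> equilibrium W a b 0 x.
Proof.
case=> Hpos Hsum Hx Hp Hn i z; split; last first.
  by move->; split; [exact: Hx | exact: lexx | exact: lexx].
case=> Hz Hf Hc; rewrite !subr0 in Hc.
have [Hxi|Hxi|Hxi] := ltrgtP (x i) 0.
- case: (ltrgtP z (x i)) => Hzx //; first by lia.
  exfalso.
  have H1 : wsum W i (fun j => (z - x i) * sle (x i) (x j)) <= Csocial W i z x - Csocial W i (x i) x.
    by rewrite Cdiff; apply: wle => // j; apply: T6.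
  rewrite wscale in H1.
  have H2 : 0 < ((z - x i)%:~R : R) * Sneg W x i.
    by apply: mulr_gt0; [rewrite ltr0z; lia | exact: Hn].
  have := lt_le_trans H2 H1; rewrite subr_gt0 => H3.
  by have := lt_le_trans H3 Hf; rewrite ltxx.
- case: (ltrgtP z (x i)) => Hzx //; last by lia.
  exfalso.
  have H1 : wsum W i (fun j => (x i - z) * sge (x i) (x j)) <= Csocial W i z x - Csocial W i (x i) x.
    by rewrite Cdiff; apply: wle => // j; apply: T5.
  rewrite wscale in H1.
  have H2 : 0 < ((x i - z)%:~R : R) * Spos W x i.
    by apply: mulr_gt0; [rewrite ltr0z; lia | exact: Hp].
  have := lt_le_trans H2 H1; rewrite subr_gt0 => H3.
  by have := lt_le_trans H3 Hf; rewrite ltxx.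
- lia.
Qed.

Lemma phaseB (R : realFieldType) n (W : 'M[R]_n) (a b : int) (i0 : 'I_n) :
  row_stochastic W -> a <= 0 <= b ->
  forall m : nat, forall x : state n, in_On a b x ->
  \sum_(j < n) (b - x j) < m%:Z ->
  (forall i, 0 < x i -> 0 < Spos W x i) ->
  ((exists i, 0 < x i) \/ (forall j, x j < 0)) ->
  exists s, legal W a b 0 x s /\ Fin W a b (run x s).
Proof.
move=> HW Hab; have [Hpos Hsum] := HW.
elim=> [|m IH] x Hx Hm Hp Hnz.
  have : 0 <= \sum_(j < n) (b - x j).
    by apply: sumr_ge0 => j _; have := Hx j; rewrite /inO; lia.
  lia.
case: (boolP [exists k, (x k < 0) && (Sneg W x k <= 0)]); last first.
  rewrite negb_exists => /forallP Hno; exists [::]; split => //=; split.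
    apply: eq_of_stable => // i Hi.
    by have := Hno i; rewrite Hi /= -ltNge.
  case: Hnz => [[i Hi]|Hall]; first by exists i; lia.
  by exists i0; have := Hall i0; lia.
case/existsP => k /andP [Hk HS].
set C := wsum W k (fun j => sge 1 (x j)).
have [z [Hz [Hlt [Hzp Hzn]]]] : exists z, inP W a b 0 x k z /\ x k < z /\
   (0 < z -> z = 1 /\ 0 < C) /\ (x k != -1 -> z = x k + 1).
  case E: ((x k == -1) && (0 < C)).
    move/andP: E => [/eqP Ek HC].
    exists 1; split; last by split; [lia | split => //; rewrite Ek].
    have [j Hj] : exists j, 1 <= x j.
      case: (boolP [exists j, 1 <= x j]) => [/existsP//|].
      rewrite negb_exists => /forallP Hj.
      have : C = (-1)%:~R.
        rewrite /C -(wconst (-1) (Hsum k)); apply: wext => j.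
        by have := Hj j; rewrite /sge; case: ifP.
      move=> HC'; move: HC; rewrite HC'; rewrite ltr0z //.
    split.
    - have := Hx j; rewrite /inO; lia.
    - rewrite -subr_le0 Cdiff Ek.
      apply: (le_trans (wle (Hpos k) (fun j => T4 (x j)))).
      rewrite wscale; rewrite -/C.
      have HC2 : (0 : R) <= 2 * C by rewrite mulr_ge0 // ltW.
      have -> : ((-2)%:~R : R) = - 2 by rewrite intrN.
      by rewrite mulNr oppr_le0.
    - rewrite Ek; lia.
  exists (x k + 1); split; last first.
    split; first lia.
    by split => // Hz; lia.
  split.
  - have := Hx k; rewrite /inO; lia.
  - rewrite -subr_le0 Cdiff.
    by rewrite (@wext _ _ W k _ (fun j => sle (x k) (x j))) // => j; apply: T3.
  - lia.
pose x' := upd x k z.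
case: (Hz) => Hz1 _ _.
have Hmono : forall j, x j <= x' j.
  move=> j; case: (eqVneq j k) => [->|Hjk].
    by rewrite /x' upd_eq ltW.
  by rewrite /x' upd_neq.
have Hx' : in_On a b x' by apply: in_On_upd.
have Hm' : \sum_(j < n) (b - x' j) < m%:Z.
  rewrite (@sum_upd _ _ (fun j => b - x j) k); last first.
    by move=> j Hj; rewrite /x' upd_neq.
  rewrite /x' upd_eq; lia.
have Hp' : forall i, 0 < x' i -> 0 < Spos W x' i.
  move=> i; case: (eqVneq i k) => [->|Hik].
    rewrite /x' upd_eq => Hz0; have [Hz2 HC] := Hzp Hz0.
    rewrite /Spos upd_eq; apply: (lt_le_trans HC).
    apply: wle => // j.
    have -> : sge z (upd x k z j) = sge 1 (upd x k z j) by rewrite Hz2.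
    by apply: sge_mono; exact: Hmono.
  rewrite /x' upd_neq // => Hi; apply: (lt_le_trans (Hp i Hi)).
  rewrite /Spos upd_neq //.
  by apply: wle => // j; apply: sge_mono; exact: Hmono.
have Hnz' : (exists i, 0 < x' i) \/ (forall j, x' j < 0).
  case: Hnz => [[i Hi]|Hall].
    by left; exists i; have := Hmono i; lia.
  have Hk1 : x k != -1.
    apply/negP => /eqP Ek.
    have HS1 : Sneg W x k = 1%:~R.
      rewrite /Sneg -(wconst 1 (Hsum k)); apply: wext => j.
      by rewrite /sle Ek; have := Hall j; case: ifP => //; lia.
    by move: HS; rewrite HS1 lerz0.
  right => j; case: (eqVneq j k) => [->|Hjk].
    by rewrite /x' upd_eq (Hzn Hk1); lia.
  by rewrite /x' upd_neq //; exact: Hall.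
have [s [Hl Hf]] := IH x' Hx' Hm' Hp' Hnz'.
by exists ((k, z) :: s).
Qed.

Lemma phaseA (R : realFieldType) n (W : 'M[R]_n) (a b : int) (i0 : 'I_n) :
  row_stochastic W -> a <= 0 <= b ->
  forall m : nat, forall x : state n, in_On a b x ->
  (forall j, x j != 0) ->
  \sum_(j < n) (x j - a) < m%:Z ->
  exists s, legal W a b 0 x s /\ Fin W a b (run x s).
Proof.
move=> HW Hab; have [Hpos Hsum] := HW.
elim=> [|m IH] x Hx H0 Hm.
  have : 0 <= \sum_(j < n) (x j - a).
    by apply: sumr_ge0 => j _; have := Hx j; rewrite /inO; lia.
  lia.
case: (boolP [exists k, (0 < x k) && (Spos W x k <= 0)]); last first.
  rewrite negb_exists => /forallP Hno.
  have Hp : forall i, 0 < x i -> 0 < Spos W x i.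
    by move=> i Hi; have := Hno i; rewrite Hi /= -ltNge.
  have Hnz : (exists i, 0 < x i) \/ (forall j, x j < 0).
    case: (boolP [exists i, 0 < x i]) => [/existsP|]; first by left.
    rewrite negb_exists => /forallP Hn; right => j.
    by have := Hn j; have := H0 j; lia.
  apply: (@phaseB R n W a b i0 HW Hab (absz (\sum_(j < n) (b - x j))).+1 x Hx _ Hp Hnz).
  lia.
case/existsP => k /andP [Hk HS].
have [z [Hz [Hlt Hz0]]] : exists z, inP W a b 0 x k z /\ z < x k /\ z != 0.
  case E: (x k == 1).
    move/eqP: E => Ek.
    exists (-1); split; last by split; lia.
    have [j Hj] : exists j, x j < 1.
      case: (boolP [exists j, x j < 1]) => [/existsP//|].
      rewrite negb_exists => /forallP Hj.
      have HS1 : Spos W x k = 1%:~R.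
        rewrite /Spos -(wconst 1 (Hsum k)); apply: wext => j.
        by rewrite /sge Ek; have := Hj j; case: ifP => //; lia.
      by move: HS; rewrite HS1 lerz0.
    split.
    - by have := Hx j; have := H0 j; rewrite /inO; lia.
    - rewrite -subr_le0 Cdiff Ek.
      rewrite (@wext _ _ W k _ (fun j => 2 * sge 1 (x j))); last first.
        by move=> j1; exact: T2 (H0 j1).
      rewrite wscale; rewrite /Spos Ek in HS.
      by rewrite pmulr_rle0 // ltr0z.
    - by rewrite Ek; lia.
  exists (x k - 1); split; last by split; lia.
  split.
  - by have := Hx k; rewrite /inO; lia.
  - rewrite -subr_le0 Cdiff.
    by rewrite (@wext _ _ W k _ (fun j => sge (x k) (x j))) // => j; apply: T1.
  - lia.
pose x' := upd x k z.
case: (Hz) => Hz1 _ _.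
have Hx' : in_On a b x' by apply: in_On_upd.
have H0' : forall j, x' j != 0.
  move=> j; case: (eqVneq j k) => [->|Hjk]; first by rewrite /x' upd_eq.
  by rewrite /x' upd_neq.
have Hm' : \sum_(j < n) (x' j - a) < m%:Z.
  rewrite (@sum_upd _ _ (fun j => x j - a) k); last first.
    by move=> j Hj; rewrite /x' upd_neq.
  rewrite /x' upd_eq; lia.
have [s [Hl Hf]] := IH x' Hx' H0' Hm'.
by exists ((k, z) :: s).
Qed.

Theorem theorem4 (R : realFieldType) (n : nat) (W : 'M[R]_n) (a b : int)
  (x0 : state n) :
  (0 < n)%N ->
  row_stochastic W ->
  a <= 0 <= b ->
  in_On a b x0 ->
  (forall j, x0 j != 0) ->
  exists s : seq ('I_n * int),
    legal W a b 0 x0 s /\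
    ((exists z : int, z != 0 /\ consensus_at (run x0 s) z) \/
     (equilibrium W a b 0 (run x0 s) /\ non_consensus (run x0 s))).
Proof.
move=> Hn HW Hab Hx H0.
pose i0 := Ordinal Hn.
have [s [Hl [Heq [k Hk]]]] :=
  @phaseA R n W a b i0 HW Hab (absz (\sum_(j < n) (x0 j - a))).+1 x0 Hx H0 ltac:(lia).
exists s; split => //.
case: (boolP [forall j, run x0 s j == run x0 s k]).
  move/forallP => Hall; left; exists (run x0 s k); split => // j.
  exact/eqP.
rewrite negb_forall => /existsP [j Hj]; right; split => //.
by exists j, k; apply/eqP.
Qed.
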